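(* Let $\psi$ be an additive character of $\mathbb{F}_{q^2}$ of conductor $q^2$. If $\rho$ is an irreducible representation of $\mathcal U=U_h^{2,q}(\mathbb{F}_{q^2})$ in which $H_{2(h-1)}$ acts by $\psi$ (i.e. $1+a\tau^{2(h-1)}$ acts by the scalar $\psi(a)$), then the restriction of $\rho$ to $H_0'$ contains the character $\widetilde\psi$.
   Context: Let $p$ be a prime, $q$ a power of $p$, $\ell\ne p$, and $h\ge2$ an integer; representations are over $\overline{\mathbb{Q}}_\ell$. For a commutative $\mathbb{F}_q$-algebra $A$, $U_h^{2,q}(A)$ is the set of formal expressions $1+\sum_{i=1}^{2(h-1)}a_i\tau^i$ ($a_i\in A$) with multiplication obtained by extending $(a\tau^i)(b\tau^j)=ab^{q^i}\tau^{i+j}$ bi-additively, $\tau^0=1$, $\tau^k=0$ for $k>2(h-1)$. In $\mathcal U=U_h^{2,q}(\mathbb{F}_{q^2})$ let $H_{2(h-1)}=\{1+a\tau^{2(h-1)}\}$ and $H_0'=\{1+\sum a_i\tau^i: a_i=0\text{ unless } i=2(h-1)\text{ or } i\text{ is odd with } i>h-1\}$. An additive character $\psi\colon\mathbb{F}_{q^2}\to\overline{\mathbb{Q}}_\ell^\times$ has conductor $q^2$ if there exists $x$ with $\psi(x^q)\ne\psi(x)$; $\widetilde\psi$ is the character $1+\sum a_i\tau^i\mapsto\psi(a_{2(h-1)})$ of $H_0'$. *)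

(* Defs.v *)
From HB Require Import structures.
From mathcomp Require Import all_boot all_order all_algebra all_field.
Set Implicit Arguments. Unset Strict Implicit. Unset Printing Implicit Defensive.
Import GRing.Theory.
Local Open Scope ring_scope.

(* The group U_h^{2,q}(L), L = F_{q^2}, with N = 2(h-1).  An element
   1 + sum_{i=1}^N a_i tau^i is stored as x : {ffun 'I_N -> L} with
   x k = a_{k+1}. *)
Section U.
Variables (L : finFieldType) (q N : nat).

(* coefficient a_i of tau^i, with a_0 = 1 and a_i = 0 for i > N *)
Definition Ucoef (x : {ffun 'I_N -> L}) (i : nat) : L :=
  if i is j.+1 then (if @insub _ (fun k => k < N)%N 'I_N j is Some k then x k else 0)
  else 1.

(* multiplication extending (a tau^i)(b tau^j) = a b^{q^i} tau^{i+j},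
   truncated at tau^N :  c_m = sum_{i=0}^{m} a_i b_{m-i}^{q^i} *)
Definition Umul (x y : {ffun 'I_N -> L}) : {ffun 'I_N -> L} :=
  [ffun k : 'I_N => \sum_(0 <= i < k.+2) Ucoef x i * Ucoef y (k.+1 - i) ^+ (q ^ i)].

Definition Uone : {ffun 'I_N -> L} := [ffun _ => 0].

Definition Utop (a : L) : {ffun 'I_N -> L} :=
  [ffun k : 'I_N => if k.+1 == N then a else 0].

End U.

Definition inH0' (L : finFieldType) (h : nat) (x : {ffun 'I_(2 * (h - 1)) -> L}) : bool :=
  [forall k : 'I_(2 * (h - 1)),
     (x k != 0) ==> ((k.+1 == 2 * (h - 1))%N || (odd k.+1 && (h - 1 < k.+1)%N))].

Definition is_add_char (L : finFieldType) (F : fieldType) (psi : L -> F) : Prop :=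
  psi 0 = 1 /\ forall x y, psi (x + y) = psi x * psi y.

Definition has_conductor_q2 (L : finFieldType) (F : fieldType) (q : nat) (psi : L -> F) : Prop :=
  exists x : L, psi (x ^+ q) != psi x.

Definition is_rep (T : finType) (mul : T -> T -> T) (one : T) (F : fieldType) (n : nat)
  (rho : T -> 'M[F]_n) : Prop :=
  rho one = 1%:M /\ forall x y, rho (mul x y) = rho x *m rho y.

Definition rep_irreducible (T : finType) (F : fieldType) (n : nat) (rho : T -> 'M[F]_n) : Prop :=
  (0 < n)%N /\
  forall m (U : 'M[F]_(m, n)), (forall x, stablemx U (rho x)) -> U != 0 -> (1%:M <= U)%MS.

(* Main.v *)
Require Import Defs.
From HB Require Import structures.
From mathcomp Require Import all_boot all_order all_algebra all_field.
From mathcomp Require Import zify ring.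
From mathcomp Require pgroup abelian.
Import GRing.Theory.
Local Open Scope ring_scope.
Set Implicit Arguments. Unset Strict Implicit.

Section Work.
Variables (L : finFieldType) (q N : nat).
Hypothesis q_gt0 : (0 < q)%N.

Local Notation T := {ffun 'I_N -> L}.
Local Notation uc := (@Ucoef L N).
Local Notation um := (@Umul L q N).

Lemma uc_ord x (k : 'I_N) : uc x k.+1 = x k.
Proof. by rewrite /Ucoef (insubT (fun k => k < N)%N (ltn_ord k)) /=; apply: f_equal; apply: val_inj. Qed.

Lemma uc_gt x t : (N < t)%N -> uc x t = 0.
Proof. by case: t => // t Ht; rewrite /Ucoef insubF // ltnNge -ltnS Ht. Qed.

Lemma uc_inj x y : (forall t, (0 < t <= N)%N -> uc x t = uc y t) -> x = y.
Proof. by move=> H; apply/ffunP => k; rewrite -!uc_ord; apply: H; rewrite /= ltn_ord. Qed.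

Lemma um_coef x y t : (0 < t <= N)%N ->
  uc (um x y) t = \sum_(0 <= i < t.+1) uc x i * uc y (t - i) ^+ (q ^ i).
Proof.
case: t => // t Ht.
by rewrite -[t]/(nat_of_ord (Ordinal (Ht : (t < N)%N))) uc_ord ffunE.
Qed.

Lemma sum_if (F : nat -> L) n j : \sum_(0 <= i < n) (if i == j then F i else 0) = if (j < n)%N then F j else 0.
Proof.
case: ltnP => hj.
  rewrite big_mkord (bigD1 (Ordinal hj)) //= eqxx big1 ?addr0 // => i /= hi.
  by rewrite ifN //; apply: contra hi => /eqP e; apply/eqP/val_inj.
by rewrite big1_seq // => i; rewrite mem_iota => /andP[_ hi]; rewrite ifN //; lia.
Qed.

Lemma z0q i : (0 : L) ^+ (q ^ i) = 0.
Proof. by rewrite expr0n expn_eq0 eqn0Ngt q_gt0. Qed.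

Definition E t (a : L) : T := [ffun k : 'I_N => if k.+1 == t then a else 0].

Lemma ucE t a s : (t <= N)%N -> uc (E t a) s = if s == 0%N then 1 else if s == t then a else 0.
Proof.
case: s => [|s] // Ht; case: (ltnP s N) => hs.
  by rewrite -[s]/(nat_of_ord (Ordinal hs)) uc_ord ffunE.
by rewrite uc_gt // ifN //; apply/eqP; lia.
Qed.

Lemma umE_l j c x t : (0 < j <= N)%N -> (0 < t <= N)%N ->
  uc (um (E j c) x) t = uc x t + (if (j <= t)%N then c * uc x (t - j) ^+ (q ^ j) else 0).
Proof.
move=> hj ht; rewrite um_coef //.
rewrite (eq_bigr (fun i => (if i == 0%N then uc x t else 0) + (if i == j then c * uc x (t - j) ^+ (q ^ j) else 0))); last first.
  move=> i _; rewrite ucE; last by lia.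
  case: (i =P 0%N) => [->|i0].
    by rewrite ifN ?expn0 ?expr1 ?subn0 ?mul1r ?addr0 //; lia.
  by case: (i =P j) => [->|ij]; rewrite ?add0r ?mul0r.
by rewrite big_split /= !sum_if /= ltnS.
Qed.

Lemma umE_r j c y t : (0 < j <= N)%N -> (0 < t <= N)%N ->
  uc (um y (E j c)) t = uc y t + (if (j <= t)%N then uc y (t - j) * c ^+ (q ^ (t - j)) else 0).
Proof.
move=> hj ht; rewrite um_coef //.
rewrite (@eq_big_nat _ _ _ 0 t.+1 _ (fun i => (if i == t then uc y t else 0) + (if i == (t - j)%N then (if (j <= t)%N then uc y (t - j) * c ^+ (q ^ (t - j)) else 0) else 0))); last first.
  move=> i /andP[_ hi]; rewrite ucE; last by lia.
  case: (i =P t) => [->|it].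
    by rewrite subnn /= expr1n mulr1 ifN ?addr0 //; lia.
  rewrite ifN; last by apply/eqP; lia.
  case: (i =P (t - j)%N) => [->|ij].
    case: (leqP j t) => hjt; first by rewrite ifT ?add0r //; apply/eqP; lia.
    by rewrite ifN ?z0q ?mulr0 ?add0r //; apply/eqP; lia.
  by rewrite ifN ?z0q ?mulr0 ?addr0 //; apply/eqP; lia.
rewrite big_split /= !sum_if /= ltnS leqnn.
by rewrite ifT //; lia.
Qed.


Lemma um_recr y g t : (0 < t <= N)%N ->
  uc (um y g) t = \sum_(0 <= i < t) uc y i * uc g (t - i) ^+ (q ^ i) + uc y t.
Proof.
by move=> ht; rewrite um_coef // big_nat_recr //= subnn expr1n mulr1.
Qed.

Lemma um_inj g : injective (fun y => um y g).
Proof.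
move=> y1 y2 /= e.
have H : forall t i, (i <= t)%N -> uc y1 i = uc y2 i.
  elim=> [|t IH] i hi.
    by have -> : i = 0%N by lia.
  case: (leqP i t) => hit; first exact: IH.
  have -> : i = t.+1 by lia.
  case: (leqP t.+1 N) => htN; last by rewrite !uc_gt.
  have ht1 : (0 < t.+1 <= N)%N by lia.
  have := um_recr y1 g ht1; rewrite e um_recr //.
  rewrite (@eq_big_nat _ _ _ 0 t.+1 (fun i => uc y1 i * uc g (t.+1 - i) ^+ (q ^ i)) (fun i => uc y2 i * uc g (t.+1 - i) ^+ (q ^ i))); last first.
    by move=> k hk; rewrite IH //; lia.
  by move/addrI.
by apply: uc_inj => t _; apply: (H t).
Qed.

Lemma A_add m u w t : N = (m + m)%N ->
  (forall i, (0 < i <= m)%N -> uc u i = 0) ->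
  (forall i, (0 < i <= m)%N -> uc w i = 0) ->
  (0 < t <= N)%N -> uc (um u w) t = uc u t + uc w t.
Proof.
move=> hN hu hw ht; rewrite um_coef // big_ltn // big_nat_recr /=; last by lia.
rewrite big1_seq ?add0r.
  by rewrite subn0 expn0 expr1 mul1r subnn expr1n mulr1 addrC.
move=> i; rewrite mem_iota => /andP[hi1 hi2].
case: (leqP i m) => him; first by rewrite hu ?mul0r //; lia.
by rewrite hw ?z0q ?mulr0 //; lia.
Qed.

Definition mk (f : nat -> L) : T := [ffun i : 'I_N => f i.+1].

Lemma ucmk f s : (0 < s <= N)%N -> uc (mk f) s = f s.
Proof.
case: s => // s hs; have hs' : (s < N)%N by lia.
by rewrite -[s]/(nat_of_ord (Ordinal hs')) uc_ord ffunE.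
Qed.

Lemma ucEp t a s : (0 < s <= N)%N -> uc (E t a) s = if s == t then a else 0.
Proof. exact: (ucmk (fun s => if s == t then a else 0)). Qed.

Lemma expq_odd (hL : #|L| = (q ^ 2)%N) s (x : L) : odd s -> x ^+ (q ^ s) = x ^+ q.
Proof.
move=> os; have [r ->] : exists r, s = r.*2.+1.
  by exists s./2; rewrite -[LHS]odd_double_half os.
elim: r => [|r IH]; first by rewrite expn1.
have -> : (q ^ (r.+1).*2.+1 = q ^ r.*2.+1 * q ^ 2)%N.
  by rewrite -expnD; congr (expn q _); lia.
by rewrite exprM IH -hL expf_card.
Qed.

Lemma ifb (b : bool) (x y : L) : b -> (if b then x else y) = x.
Proof. by move=> ->. Qed.
Lemma ifnb (b : bool) (x y : L) : ~~ b -> (if b then x else y) = y.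
Proof. by move/negbTE->. Qed.

Lemma frob_q (hL : #|L| = (q ^ 2)%N) (x y : L) :
  (x + y) ^+ q = x ^+ q + y ^+ q.
Proof.
have [p pr_p cp] := finPcharP L.
have h1 : p.-nat #|L|.
  have := abelian.abelem_pgroup (abelian.fin_ring_pchar_abelem cp).
  by rewrite /pgroup.pgroup cardsT.
apply: exprDn_pchar.
have : [pchar L].-nat #|L|.
  apply: sub_in_pnat h1 => r _; rewrite inE => /eqP ->; exact: cp.
by rewrite hL pnatX orbF.
Qed.

Definition dd (c a : L) := c * a ^+ q - a * c ^+ q.

Section Rep.
Variables (m : nat) (hN : N = (m + m)%N) (hL : #|L| = (q ^ 2)%N).
Variables (F : fieldType) (charF0 : [pchar F] =i pred0).
Variables (psi : L -> F) (psi0 : psi 0 = 1) (psiD : forall x y, psi (x + y) = psi x * psi y).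
Variables (xc : L) (hxc : psi (xc ^+ q) != psi xc).
Variables (n : nat) (rho : T -> 'M[F]_n) (rho1 : rho (Uone L N) = 1%:M)
  (rhoM : forall x y, rho (um x y) = rho x *m rho y)
  (rhoTop : forall a, rho (E N a) = (psi a)%:M).

Definition inH0 x := forall t, (0 < t <= N)%N -> uc x t != 0 -> t = N \/ (odd t /\ (m < t)%N).
Definition Inv k := exists2 v : 'rV[F]_n, v != 0 & forall x, inH0 x ->
  (forall t, (0 < t <= k)%N -> uc x t = 0) -> v *m rho x = psi (uc x N) *: v.

Lemma rho_unitl g : exists h, rho g *m rho h = 1%:M.
Proof.
have [f' _ K] := injF_bij (um_inj (g:=g)).
exists (f' (Uone L N)); apply: mulmx1C; rewrite -rhoM.
by have /= -> := K (Uone L N).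
Qed.

Lemma dd_add c c' a : dd (c + c') a = dd c a + dd c' a.
Proof. by rewrite /dd frob_q //; ring. Qed.

Lemma char_sum a : \sum_(c : L) psi (dd c a) = if a == 0 then (#|L|)%:R else 0.
Proof.
case: (a =P 0) => [->|a0].
  rewrite (eq_bigr (fun _ => 1)); last first.
    by move=> c _; rewrite /dd expr0n eqn0Ngt q_gt0 mulr0 mul0r subrr psi0.
  by rewrite sumr_const.
set c0 := (xc / a) ^+ q.
have hd : dd c0 a = xc ^+ q - xc.
  rewrite /dd /c0 -exprMn divfK; last by apply/eqP.
  by rewrite -exprM mulnn -hL expf_card mulrC divfK //; apply/eqP.
have hne : psi (dd c0 a) != 1.
  rewrite hd; apply: contra hxc => /eqP e.
  by rewrite -{1}(subrK xc (xc ^+ q)) psiD e mul1r.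
set S := \sum_(c : L) _.
have : S = psi (dd c0 a) * S.
  rewrite /S [LHS](reindex_inj (addrI c0)) /= mulr_sumr; apply: eq_bigr => c _.
  by rewrite dd_add psiD.
move=> h; have : (1 - psi (dd c0 a)) * S = 0 by rewrite mulrBl mul1r -h subrr.
move/eqP; rewrite mulf_eq0 subr_eq0 eq_sym (negbTE hne) /= => /eqP -> //.
Qed.

Section Step.
Variables (k : nat) (hkm : (m < k)%N) (hkN : (k < N)%N) (ok : odd k).
Local Notation j := (N - k)%N.


Definition Yk (a b : L) := mk (fun s => if s == k then a else if s == N then b else 0).

Lemma K1a a b : um (E k a) (E N b) = Yk a b.
Proof.
apply: uc_inj => t ht; rewrite (A_add (m := m)) // ?ucmk ?ucEp //.
- by case: eqP => [->|tk]; case: eqP => [e|ne]; rewrite ?addr0 ?add0r //; lia.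
- by move=> i hi; rewrite ucEp ?ifN //; [apply/eqP; lia| lia].
- by move=> i hi; rewrite ucEp ?ifN //; [apply/eqP; lia| lia].
Qed.

Lemma K1b c a : um (E j c) (E k a) = um (Yk a (dd c a)) (E j c).
Proof.
have hj : (0 < j <= N)%N by lia.
have jo : odd j by move: ok; rewrite hN oddB ?addnn ?odd_double //; lia.
apply: uc_inj => t ht; rewrite umE_l // umE_r // ucEp // ucmk //.
case: (ltngtP t j) => [tj|tj|->].
- rewrite !addr0; case: eqP => // _; rewrite ifN //; apply/eqP; lia.
- have jt : (j <= t)%N by lia.
  rewrite ucmk ?ucEp; try lia.
  case: (t =P N) => [tN|tN].
    have e1 : t != k by apply/eqP; lia.
    have e2 : (t - j == k)%N by apply/eqP; lia.
    have e3 : t == N by apply/eqP; lia.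
    rewrite ?(ifnb _ _ e1) ?(ifb _ _ e2) ?(ifb _ _ e3).
    rewrite /dd !expq_odd //; last by rewrite tN subKn //; lia.
    by rewrite add0r subrK.
  have e1 : (t - j != k)%N by apply/eqP; lia.
  have e2 : (t - j != N)%N by apply/eqP; lia.
  rewrite ?(ifnb _ _ e1) ?(ifnb _ _ e2).
  by rewrite z0q mul0r mulr0 !addr0.
- have e1 : j != k by apply/eqP; lia.
  have e2 : j != N by apply/eqP; lia.
  rewrite ?(ifnb _ _ e1) ?(ifnb _ _ e2) subnn expn0 expr1 !add0r.
  by rewrite /Ucoef expr1n mulr1 mul1r.
Qed.


Lemma uc0 x : uc x 0 = 1. Proof. by []. Qed.

Lemma K2 c x : (forall s, (0 < s <= k)%N -> uc x s = 0) -> um (E j c) x = um x (E j c).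
Proof.
have hj : (0 < j <= N)%N by lia.
move=> hx; apply: uc_inj => t ht; rewrite umE_l // umE_r //.
case: (leqP j t) => jt //.
case: (t =P j) => [->|tj]; first by rewrite subnn uc0 expr1n mulr1 expn0 expr1 mul1r.
by rewrite (hx (t - j)%N) ?z0q ?mulr0 ?mul0r //; lia.
Qed.

Lemma K3 a b : um (E k a) (E k b) = E k (a + b).
Proof.
apply: uc_inj => t ht; rewrite (A_add (m := m)) // ?ucEp //.
- by case: eqP; rewrite ?addr0.
- by move=> i hi; rewrite ucEp ?ifN //; [apply/eqP; lia| lia].
- by move=> i hi; rewrite ucEp ?ifN //; [apply/eqP; lia| lia].
Qed.

Lemma K4 a x : (forall s, (0 < s <= k)%N -> uc x s = 0) -> um (E k a) x = um x (E k a).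
Proof.
move=> hx.
have h1 : forall i, (0 < i <= m)%N -> uc x i = 0 by move=> i hi; apply: hx; lia.
have h2 : forall i, (0 < i <= m)%N -> uc (E k a) i = 0.
  by move=> i hi; rewrite ucEp ?ifN //; [apply/eqP; lia| lia].
apply: uc_inj => t ht; rewrite (A_add (m := m)) // (A_add (m := m)) //.
by rewrite addrC.
Qed.

Definition cut x := mk (fun s => if s == k then 0 else uc x s).

Lemma K5 x : (forall s, (0 < s < k)%N -> uc x s = 0) -> x = um (E k (uc x k)) (cut x).
Proof.
move=> hx.
have h1 : forall i, (0 < i <= m)%N -> uc (cut x) i = 0.
  by move=> i hi; rewrite ucmk ?ifN ?hx //; try lia; apply/eqP; lia.
have h2 : forall i, (0 < i <= m)%N -> uc (E k (uc x k)) i = 0.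
  by move=> i hi; rewrite ucEp ?ifN //; [apply/eqP; lia| lia].
apply: uc_inj => t ht; rewrite (A_add (m := m)) // ucEp // ucmk //.
by case: (t =P k) => [->|_]; rewrite ?addr0 ?add0r.
Qed.

Lemma cut0 x s : (0 < s <= k)%N -> (forall s, (0 < s < k)%N -> uc x s = 0) -> uc (cut x) s = 0.
Proof.
move=> hs hx; rewrite ucmk; last by lia.
by case: (s =P k) => // sk; apply: hx; lia.
Qed.

Lemma cutN x : uc (cut x) N = uc x N.
Proof. by rewrite ucmk ?ifN //; [apply/eqP; lia | lia]. Qed.


Lemma step_odd : Inv k -> Inv k.-1.
Proof.
case=> v v0 hv.
pose Sc c := \sum_(a : L) psi (dd c a) *: rho (E k a).
pose Ts := \sum_(a : L) rho (E k a).
have key : forall c, rho (E j c) *m Ts = Sc c *m rho (E j c).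
  move=> c; rewrite mulmx_sumr mulmx_suml; apply: eq_bigr => a _.
  by rewrite -rhoM K1b rhoM -K1a rhoM rhoTop mul_mx_scalar -scalemxAl.
have sumS : \sum_(c : L) v *m Sc c = (#|L|)%:R *: v.
  rewrite (eq_bigr (fun c => \sum_(a : L) psi (dd c a) *: (v *m rho (E k a)))); last first.
    by move=> c _; rewrite mulmx_sumr; apply: eq_bigr => a _; rewrite scalemxAr.
  rewrite exchange_big /=.
  rewrite (eq_bigr (fun a => (\sum_(c : L) psi (dd c a)) *: (v *m rho (E k a)))); last first.
    by move=> a _; rewrite scaler_suml.
  rewrite (bigD1 0) //= char_sum eqxx.
  have -> : E k 0 = Uone L N by apply/ffunP => i; rewrite !ffunE; case: ifP.
  rewrite rho1 mulmx1 [X in _ + X]big1 ?addr0 // => a a0.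
  by rewrite char_sum (negbTE a0) scale0r.
have [c hc] : exists c, v *m Sc c != 0.
  case: (pickP (fun c => v *m Sc c != 0)) => [c hc|none]; first by exists c.
  have : (#|L|)%:R *: v = 0.
    by rewrite -sumS big1 // => c _; apply/eqP; move: (none c) => /negbFE.
  move/eqP; rewrite scaler_eq0 (negbTE v0) orbF.
  by move: charF0 => /pcharf0P ->; rewrite hL expn_eq0 eqn0Ngt q_gt0.
have [h hh] := rho_unitl (E j c).
exists (v *m rho (E j c) *m Ts).
  rewrite -mulmxA key mulmxA; apply: contra hc => /eqP e; apply/eqP.
  by rewrite -[v *m Sc c]mulmx1 -hh mulmxA e mul0mx.
move=> x hx hz.
have hz' : forall s, (0 < s < k)%N -> uc x s = 0 by move=> s hs; apply: hz; lia.
rewrite (K5 hz') rhoM.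
have hcz : forall s, (0 < s <= k)%N -> uc (cut x) s = 0 by move=> s hs; apply: cut0.
have hcH : inH0 (cut x).
  move=> t ht; rewrite ucmk //; case: (t =P k) => [_|_]; first by rewrite eqxx.
  exact: hx.
have e1 : forall A : 'M_(1, n), A *m Ts *m rho (E k (uc x k)) = A *m Ts.
  move=> A; rewrite -mulmxA; congr (_ *m _).
  rewrite /Ts mulmx_suml [RHS](reindex_inj (addIr (uc x k))) /=; apply: eq_bigr => a _.
  by rewrite -rhoM K3.
have e2 : forall A : 'M_(1, n), A *m Ts *m rho (cut x) = A *m rho (cut x) *m Ts.
  move=> A; rewrite -!mulmxA; congr (_ *m _).
  rewrite mulmx_suml mulmx_sumr; apply: eq_bigr => a _.
  by rewrite -!rhoM K4.
have e3 : forall A : 'M_(1, n), A *m rho (E j c) *m rho (cut x) = A *m rho (cut x) *m rho (E j c).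
  by move=> A; rewrite -!mulmxA -!rhoM K2.
rewrite !mulmxA e1 e2 e3 (hv _ hcH hcz) cutN.
by rewrite -(K5 hz') -!scalemxAl.
Qed.

End Step.

Lemma base : (0 < n)%N -> (0 < N)%N -> Inv N.-1.
Proof.
move=> hn hN0; exists (const_mx 1).
  apply/eqP => /matrixP/(_ 0 (Ordinal hn)); rewrite !mxE; apply/eqP; exact: oner_neq0.
move=> x _ hz.
have -> : x = E N (uc x N).
  apply: uc_inj => t ht; rewrite ucEp //.
  by case: (t =P N) => [->|tN] //; apply: hz; lia.
by rewrite rhoTop mul_mx_scalar ucEp ?eqxx //; lia.
Qed.

Lemma step_even k : (0 < k < N)%N -> ~~ (odd k && (m < k)%N) -> Inv k -> Inv k.-1.
Proof.
move=> hk hodd [v v0 hv]; exists v => // x hx hz; apply: hv => // t ht.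
case: (ltnP t k) => htk; first by apply: hz; lia.
have -> : t = k by lia.
apply/eqP; apply: contraT => nz.
case: (hx k _ nz); first by lia.
  by move=> e; lia.
by case=> o mk; move: hodd; rewrite o mk.
Qed.

Lemma all_inv : (0 < n)%N -> (0 < m)%N -> forall s, Inv (N.-1 - s).
Proof.
move=> hn hm; elim=> [|s IH]; first by rewrite subn0; apply: base => //; lia.
case: (N.-1 - s =P 0)%N => [e|ne].
  have -> : (N.-1 - s.+1 = 0)%N by lia.
  by rewrite -e.
have -> : (N.-1 - s.+1 = (N.-1 - s).-1)%N by lia.
case ko : (odd (N.-1 - s) && (m < N.-1 - s)%N).
  move/andP: ko => [o mk]; apply: step_odd => //; lia.
by apply: step_even => //; [lia | rewrite ko].
Qed.

End Rep.
End Work.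

Unset Implicit Arguments.

Theorem lemma2p2
  (F : closedFieldType) (charF0 : [pchar F] =i pred0)
  (L : finFieldType) (q : nat) (hL : #|L| = (q ^ 2)%N)
  (h : nat) (hh : (2 <= h)%N)
  (psi : L -> F) (psi_add : is_add_char psi) (psi_cond : has_conductor_q2 q psi)
  (n : nat) (rho : {ffun 'I_(2 * (h - 1)) -> L} -> 'M[F]_n)
  (rho_rep : is_rep (@Umul L q (2 * (h - 1))) (@Uone L (2 * (h - 1))) rho)
  (rho_irr : rep_irreducible rho)
  (rho_top : forall a : L, rho (@Utop L (2 * (h - 1)) a) = (psi a)%:M) :
  exists2 v : 'rV[F]_n, v != 0 &
    forall x, inH0' x -> v *m rho x = psi (Ucoef x (2 * (h - 1))) *: v.
Proof.
have q_gt0 : (0 < q)%N.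
  have : (0 < #|L|)%N by apply/card_gt0P; exists 0.
  by rewrite hL; case: q {hL psi_cond rho_rep rho_top}.
have hN : (2 * (h - 1) = (h - 1) + (h - 1))%N by lia.
case: psi_add => psi0 psiD; case: psi_cond => xc hxc.
case: rho_rep => rho1 rhoM; case: rho_irr => hn _.
have hm : (0 < h - 1)%N by lia.
have := all_inv q_gt0 hN hL charF0 psi0 psiD hxc rho1 rhoM rho_top hn hm ((2 * (h - 1)).-1).
rewrite subnn => -[v v0 hv]; exists v => // x hx.
apply: hv => //; last by move=> t; lia.
move=> t ht nz.
have ht' : (t.-1 < 2 * (h - 1))%N by lia.
have e : Ucoef x t = x (Ordinal ht').
  transitivity (Ucoef x (Ordinal ht').+1); last exact: uc_ord.
  by apply: f_equal; rewrite /= prednK //; lia.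
have := (forallP hx) (Ordinal ht'); rewrite -e nz /= prednK; last by lia.
have tp : (0 < t)%N by lia.
case/orP => [/eqP ->|/andP [o lt]]; first by left.
by right; split => //; rewrite -(prednK tp) /=.
Qed.
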